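(* Let $\Lambda$ be a rank-2 Bratteli diagram with levels $(V_n)$ and path groupoid $G$. There is a unique automorphism $\alpha$ of $\Lambda$ such that $\alpha(e) = \mathcal{F}^{m_n}(e)$ for all $n$ and all $e\in V_n\Lambda^{e_1}$. This $\alpha$ induces a homeomorphism, also denoted $\alpha$, of $\Lambda^\infty$ by $\alpha(x) = \alpha\circ x$, which in turn induces an automorphism $\alpha$ of the topological groupoid $G$ with $\alpha(x,m,y) = (\alpha(x),m,\alpha(y))$.
   Context: A 2-graph is a countable category $\Lambda$ with a functor $d:\Lambda\to\mathbb{N}^2$ satisfying the factorisation property; $\Lambda^m=d^{-1}(m)$, $\Lambda^0$ the vertices; row-finite means each $v\Lambda^m$ is finite. Blue edges: $\Lambda^{e_1}$; red edges: $\Lambda^{e_2}$. A cycle is $\lambda$ with $d(\lambda)\ne0$, $r(\lambda)=s(\lambda)$ and $s(\lambda')\ne s(\lambda)$ whenever $\lambda=\lambda'\lambda''$ with $0<d(\lambda')<d(\lambda)$; it is isolated if whenever $\lambda=\lambda'\lambda''$ with $d(\lambda')\ne0$, $r(\lambda)\Lambda^{d(\lambda')}\setminus\{\lambda'\}$ and $\Lambda^{d(\lambda'')}s(\lambda)\setminus\{\lambda''\}$ are empty. A rank-2 Bratteli diagram is a row-finite 2-graph whose vertex set is a disjoint union of nonempty finite sets $V_n$ ($n\ge0$) with: (1) each blue edge in some $V_n\Lambda^{e_1}V_{n+1}$; (2) the blue graph has no sources and all sinks in $V_0$; (3) every vertex lies on an isolated red cycle and $\Lambda^{e_2}=\bigcup_nV_n\Lambda^{e_2}V_n$.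 For $e\in\Lambda^{e_1}$ let $f$ be the unique element of $\Lambda^{e_2}r(e)$ and $\mathcal{F}(e)$ the unique blue edge with $fe=\mathcal{F}(e)f'$ for a red edge $f'$; $o(e)$ is the least $k>0$ with $\mathcal{F}^k(e)=e$; $O_n=\operatorname{lcm}\{o(e):e\in V_n\Lambda^{e_1}\}$; $m_0=0$, $m_{n+1}=m_n+nO_n$. An automorphism of $\Lambda$ is a degree-preserving bijective functor. $\Omega_2$ is the 2-graph with vertices $\mathbb{N}^2$ and morphisms $(n,n+m)$; $\Lambda^\infty$ is the set of degree-preserving functors $x:\Omega_2\to\Lambda$, $\sigma^p(x)(m,n)=x(m+p,n+p)$, and for $\lambda\in\Lambda$, $Z(\lambda)=\{\lambda z: z\in s(\lambda)\Lambda^\infty\}$ generates the topology. The path groupoid is $G=\{(x,l-m,y)\in\Lambda^\infty\times\mathbb{Z}^2\times\Lambda^\infty : \sigma^l(x)=\sigma^m(y)\}$ with $(x,n,y)(y,k,z)=(x,n+k,z)$, $(x,n,y)^{-1}=(y,-n,x)$, and topology with basic open sets $Z(\lambda,\mu)=\{(\lambda z,d(\lambda)-d(\mu),\mu z): z\in s(\lambda)\Lambda^\infty\}$ for $s(\lambda)=s(\mu)$. *)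

(* Defs.v *)
From HB Require Import structures.
From mathcomp Require Import all_boot all_algebra.
From Stdlib Require Import ClassicalEpsilon List.
Set Implicit Arguments. Unset Strict Implicit. Unset Printing Implicit Defensive.

Definition N2 := (nat * nat)%type.
Definition zeroN2 : N2 := (0, 0)%N.
Definition e1 : N2 := (1, 0)%N.
Definition e2 : N2 := (0, 1)%N.
Definition addN2 (a b : N2) : N2 := (a.1 + b.1, a.2 + b.2)%N.
Definition subN2 (a b : N2) : N2 := (a.1 - b.1, a.2 - b.2)%N.
Definition leN2 (a b : N2) : bool := (a.1 <= b.1)%N && (a.2 <= b.2)%N.

Lemma leN2_refl (m : N2) : leN2 m m.
Proof. by rewrite /leN2 !leqnn. Qed.

Lemma leN2_0 (m : N2) : leN2 zeroN2 m.
Proof. by []. Qed.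

Lemma leN2_addr (p : N2) (m n : N2) : leN2 m n -> leN2 (addN2 m p) (addN2 n p).
Proof. by rewrite /leN2 /addN2 /= !leq_add2r. Qed.

(** * 2-graphs: a countable category with a degree functor d : Lambda -> N^2
    satisfying the factorisation property.  [cmp f g] is the composite
    "f g" (first g, then f), meaningful when [src f = rng g]. *)
Record two_graph := TwoGraph {
  Obj : countType;
  Mor : countType;
  rng : Mor -> Obj;
  src : Mor -> Obj;
  idm : Obj -> Mor;
  cmp : Mor -> Mor -> Mor;
  deg : Mor -> N2;
  rng_idm : forall v, rng (idm v) = v;
  src_idm : forall v, src (idm v) = v;
  cmp_idl : forall f, cmp (idm (rng f)) f = f;
  cmp_idr : forall f, cmp f (idm (src f)) = f;
  rng_cmp : forall f g, src f = rng g -> rng (cmp f g) = rng f;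
  src_cmp : forall f g, src f = rng g -> src (cmp f g) = src g;
  cmpA : forall f g h, src f = rng g -> src g = rng h ->
           cmp (cmp f g) h = cmp f (cmp g h);
  deg_idm : forall v, deg (idm v) = zeroN2;
  deg_cmp : forall f g, src f = rng g -> deg (cmp f g) = addN2 (deg f) (deg g);
  factorisation : forall (l : Mor) (m n : N2), deg l = addN2 m n ->
    exists! p : Mor * Mor,
      deg p.1 = m /\ deg p.2 = n /\ src p.1 = rng p.2 /\ l = cmp p.1 p.2
}.

Arguments rng {t}. Arguments src {t}. Arguments idm {t}. Arguments cmp {t}.
Arguments deg {t}.

Section TwoGraphDefs.
Variable L : two_graph.

Definition row_finite : Prop :=
  forall (v : Obj L) (m : N2), exists s : list (Mor L),
    forall l : Mor L, rng l = v -> deg l = m -> l \in s.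

Definition is_blue (e : Mor L) : Prop := deg e = e1.
Definition is_red (f : Mor L) : Prop := deg f = e2.

Definition is_cycle (l : Mor L) : Prop :=
  deg l <> zeroN2 /\ rng l = src l /\
  forall l' l'' : Mor L, src l' = rng l'' -> l = cmp l' l'' ->
    deg l' <> zeroN2 -> deg l' <> deg l -> src l' <> src l.

Definition is_isolated (l : Mor L) : Prop :=
  forall l' l'' : Mor L, src l' = rng l'' -> l = cmp l' l'' -> deg l' <> zeroN2 ->
    (forall m : Mor L, rng m = rng l -> deg m = deg l' -> m = l') /\
    (forall m : Mor L, src m = src l -> deg m = deg l'' -> m = l'').

Definition is_red_path (l : Mor L) : Prop := (deg l).1 = 0%N.

Definition lies_on (v : Obj L) (l : Mor L) : Prop :=
  exists l' l'' : Mor L, src l' = rng l'' /\ l = cmp l' l'' /\ src l' = v.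

(** rank-2 Bratteli diagram with levels given by [level] (V_n = level^-1 n) *)
Definition rank2_bratteli (level : Obj L -> nat) : Prop :=
  row_finite /\
  (forall n, exists v : Obj L, level v = n) /\
  (forall n, exists s : list (Obj L), forall v, level v = n -> v \in s) /\
  (forall e : Mor L, is_blue e -> level (src e) = (level (rng e)).+1) /\
  (forall v : Obj L, exists e : Mor L, is_blue e /\ rng e = v) /\
  (forall v : Obj L, (forall e : Mor L, is_blue e -> src e <> v) -> level v = 0%N) /\
  (forall v : Obj L, exists l : Mor L,
      is_red_path l /\ is_cycle l /\ is_isolated l /\ lies_on v l) /\
  (forall f : Mor L, is_red f -> level (rng f) = level (src f)).

Definition Fmap (e : Mor L) : Mor L :=
  epsilon (inhabits e) (fun g : Mor L =>
    exists f f' : Mor L, is_red f /\ is_red f' /\ src f = rng e /\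
      is_blue g /\ src g = rng f' /\ cmp f e = cmp g f').

Definition orderF (e : Mor L) : nat :=
  epsilon (inhabits 0%N) (fun k : nat =>
    (0 < k)%N /\ iter k Fmap e = e /\
    forall j, (0 < j)%N -> iter j Fmap e = e -> (k <= j)%N).

Definition levelEdges (level : Obj L -> nat) (n : nat) : list (Mor L) :=
  epsilon (inhabits [::]) (fun s : list (Mor L) =>
    uniq s /\ forall e, e \in s <-> (is_blue e /\ level (rng e) = n)).

Definition Olcm (level : Obj L -> nat) (n : nat) : nat :=
  \big[lcmn/1%N]_(e <- levelEdges level n) orderF e.

Fixpoint mseq (level : Obj L -> nat) (n : nat) : nat :=
  match n with
  | 0 => 0
  | n'.+1 => mseq level n' + n' * Olcm level n'
  end.

(** automorphisms: degree-preserving bijective functors Lambda -> Lambda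
    (given by the map on morphisms; the object map is part of functoriality) *)
Definition is_endofunctor (a : Mor L -> Mor L) : Prop :=
  exists ao : Obj L -> Obj L,
    (forall v, a (idm v) = idm (ao v)) /\
    (forall f, rng (a f) = ao (rng f)) /\
    (forall f, src (a f) = ao (src f)) /\
    (forall f g, src f = rng g -> a (cmp f g) = cmp (a f) (a g)).

Definition is_automorphism (a : Mor L -> Mor L) : Prop :=
  is_endofunctor a /\ (forall f, deg (a f) = deg f) /\ bijective a.

(** Omega_2 : morphisms (m, n) with m <= n *)
Definition O2Mor := {p : N2 * N2 | leN2 p.1 p.2}.
Definition om (m n : N2) (h : leN2 m n) : O2Mor :=
  exist (fun p : N2 * N2 => leN2 p.1 p.2) (m, n) h.

Definition ipath := O2Mor -> Mor L.

Definition is_inf_path (x : ipath) : Prop :=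
  exists xo : N2 -> Obj L,
    (forall m, x (om (leN2_refl m)) = idm (xo m)) /\
    (forall m n (h : leN2 m n),
        rng (x (om h)) = xo m /\ src (x (om h)) = xo n /\
        deg (x (om h)) = subN2 n m) /\
    (forall m n p (h1 : leN2 m n) (h2 : leN2 n p) (h3 : leN2 m p),
        x (om h3) = cmp (x (om h1)) (x (om h2))).

Definition path_rng (x : ipath) : Obj L := rng (x (om (leN2_refl zeroN2))).

Definition shift (p : N2) (x : ipath) : ipath :=
  fun w : O2Mor => x (om (leN2_addr p (proj2_sig w))).

(** x = l z : the (unique) infinite path with x(0, d l) = l and sigma^{d l} x = z *)
Definition cat_is (l : Mor L) (z x : ipath) : Prop :=
  is_inf_path x /\ x (om (leN2_0 (deg l))) = l /\ shift (deg l) x = z.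

Definition cyl (l : Mor L) (x : ipath) : Prop :=
  exists z, is_inf_path z /\ path_rng z = src l /\ cat_is l z x.

Definition basisInf (U : ipath -> Prop) : Prop :=
  exists l : Mor L, forall x, U x <-> cyl l x.

Record gelt := GElt { gx : ipath; gk : int * int; gy : ipath }.

Definition diffZ (a b : N2) : int * int :=
  ((Posz a.1 - Posz b.1)%R, (Posz a.2 - Posz b.2)%R).

Definition in_G (g : gelt) : Prop :=
  is_inf_path (gx g) /\ is_inf_path (gy g) /\
  exists l m : N2, gk g = diffZ l m /\ shift l (gx g) = shift m (gy g).

Definition composable (g h : gelt) : Prop := gy g = gx h.
Definition gmul (g h : gelt) : gelt :=
  GElt (gx g) (((gk g).1 + (gk h).1)%R, ((gk g).2 + (gk h).2)%R) (gy h).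

Definition bcyl (l m : Mor L) (g : gelt) : Prop :=
  exists z, is_inf_path z /\ path_rng z = src l /\
    cat_is l z (gx g) /\ cat_is m z (gy g) /\ gk g = diffZ (deg l) (deg m).

Definition basisG (U : gelt -> Prop) : Prop :=
  exists l m : Mor L, src l = src m /\ forall g, U g <-> bcyl l m g.

End TwoGraphDefs.

(** topology on a subset X of T generated by the family B of subsets of X *)
Definition gen_open {T : Type} (X : T -> Prop) (B : (T -> Prop) -> Prop)
    (U : T -> Prop) : Prop :=
  (forall x, U x -> X x) /\
  forall x, U x -> exists bs : list (T -> Prop),
    Forall B bs /\ Forall (fun b => b x) bs /\
    forall y, X y -> Forall (fun b => b y) bs -> U y.

Definition homeo_on {T : Type} (X : T -> Prop) (B : (T -> Prop) -> Prop)
    (f : T -> T) : Prop :=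
  (forall x, X x -> X (f x)) /\
  (forall x y, X x -> X y -> f x = f y -> x = y) /\
  (forall y, X y -> exists x, X x /\ f x = y) /\
  (forall V, gen_open X B V -> gen_open X B (fun x => X x /\ V (f x))) /\
  (forall U, gen_open X B U -> gen_open X B (fun y => exists x, U x /\ f x = y)).

Definition top_groupoid_aut (L : two_graph) (phi : gelt L -> gelt L) : Prop :=
  homeo_on (@in_G L) (@basisG L) phi /\
  (forall g h, in_G g -> in_G h ->
     (composable (phi g) (phi h) <-> composable g h)) /\
  (forall g h, in_G g -> in_G h -> composable g h ->
     phi (gmul g h) = gmul (phi g) (phi h)).

Definition alpha_spec (L : two_graph) (level : Obj L -> nat)
    (a : Mor L -> Mor L) : Prop :=
  forall (n : nat) (e : Mor L), is_blue e -> level (rng e) = n ->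
    a e = iter (mseq level n) (@Fmap L) e.

(* Main.v *)
Require Import Defs.
From Stdlib Require Import ClassicalEpsilon FunctionalExtensionality Classical List.
From HB Require Import structures.
From mathcomp Require Import all_boot all_algebra.
From mathcomp Require Import zify.
Set Implicit Arguments. Unset Strict Implicit. Unset Printing Implicit Defensive.

Lemma uniq_map_inj (T1 T2 : eqType) (g : T1 -> T2) (s : seq T1) x y :
  uniq (map g s) -> x \in s -> y \in s -> g x = g y -> x = y.
Proof.
elim: s => //= a s IH /andP [na us]; rewrite !inE => /orP [/eqP ->|xs] /orP [/eqP ->|ys] //.
- by move=> e; case/negP: na; rewrite e map_f.
- by move=> e; case/negP: na; rewrite -e map_f.
- exact: IH.
Qed.

Lemma fin_surj (T : eqType) (s : seq T) (f : T -> T) :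
  uniq s -> (forall x, x \in s -> f x \in s) -> {in s &, injective f} ->
  forall y, y \in s -> exists2 x, x \in s & f x = y.
Proof.
move=> us fs fi y ys.
have um : uniq (map f s) by rewrite map_inj_in_uniq.
have sub : {subset map f s <= s} by move=> z /mapP [x xs ->]; apply: fs.
have sz : size s <= size (map f s) by rewrite size_map.
have [_ eqi] := uniq_min_size um sub sz.
by move: ys; rewrite -eqi => /mapP [x xs ->]; exists x.
Qed.

Lemma fin_period (T : choiceType) (s : seq T) (f : T -> T) :
  (forall x, x \in s -> f x \in s) -> {in s &, injective f} ->
  forall x, x \in s -> exists k, 0 < k /\ iter k f x = x.
Proof.
move=> fs fi x xs.
pose f' (y : seq_sub s) : seq_sub s := SeqSub (fs _ (ssvalP y)).
have f'i : injective f'.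
  move=> a b e; apply: val_inj; apply: fi; try exact: ssvalP.
  by move: (congr1 val e).
have vi k y : val (iter k f' y) = iter k f (val y).
  by elim: k => //= k ->.
exists (order f' (SeqSub xs)); split; first exact: order_gt0.
by have := congr1 val (iter_order f'i (SeqSub xs)); rewrite vi.
Qed.

Section Gen.
Variable L : two_graph.
Implicit Types (l f g h : Mor L) (v w : Obj L).

Lemma fact_uniq (p1 p2 q1 q2 : Mor L) :
  deg p1 = deg q1 -> deg p2 = deg q2 -> src p1 = rng p2 -> src q1 = rng q2 ->
  cmp p1 p2 = cmp q1 q2 -> p1 = q1 /\ p2 = q2.
Proof.
move=> d1 d2 s1 s2 e.
have [p [_ U]] := factorisation (deg_cmp s1).
have A := U (p1, p2) (conj erefl (conj erefl (conj s1 erefl))).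
have B := U (q1, q2) (conj (esym d1) (conj (esym d2) (conj s2 e))).
by rewrite A in B; case: B.
Qed.

Lemma fact_ex l m n : deg l = addN2 m n -> exists p1 p2,
  deg p1 = m /\ deg p2 = n /\ src p1 = rng p2 /\ l = cmp p1 p2.
Proof. by move=> d; have [[p1 p2] [[? [? [? ?]]] _]] := factorisation d; exists p1, p2. Qed.

Lemma deg0_idm l : deg l = zeroN2 -> l = idm (rng l).
Proof.
move=> d.
have [] := @fact_uniq (idm (rng l)) l l (idm (src l)).
- by rewrite deg_idm d.
- by rewrite deg_idm d.
- by rewrite src_idm.
- by rewrite rng_idm.
- by rewrite cmp_idl cmp_idr.
by move=> ->.
Qed.

Lemma deg0_idm_src l : deg l = zeroN2 -> l = idm (src l).
Proof.
move=> d; have E := deg0_idm d.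
by rewrite {2}E src_idm.
Qed.

Lemma idm_inj v w : idm v = idm w :> Mor L -> v = w.
Proof. by move=> e; rewrite -(rng_idm v) e rng_idm. Qed.

End Gen.

Lemma N2E (x y : N2) : x = y <-> x.1 = y.1 /\ x.2 = y.2.
Proof. by case: x; case: y => a b c d /=; split => [[-> ->]|[-> ->]]. Qed.

Section Brat.
Variable L : two_graph.
Variable level : Obj L -> nat.
Hypothesis HB : rank2_bratteli level.
Implicit Types (l f g h : Mor L) (v w : Obj L).

Lemma rf : row_finite L. Proof. by case: HB. Qed.
Lemma finlev n : exists s : list (Obj L), forall v, level v = n -> v \in s.
Proof. by case: HB => _ [_ [H _]]. Qed.
Lemma blue_lev e : is_blue e -> level (src e) = (level (rng e)).+1.
Proof. by case: HB => _ [_ [_ [H _]]]; apply: H. Qed.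
Lemma nosrc v : exists e, is_blue e /\ rng e = v.
Proof. by case: HB => _ [_ [_ [_ [H _]]]]. Qed.
Lemma sinks v : (forall e, is_blue e -> src e <> v) -> level v = 0.
Proof. by case: HB => _ [_ [_ [_ [_ [H _]]]]]; apply: H. Qed.
Lemma cyc v : exists l, is_red_path l /\ is_cycle l /\ is_isolated l /\ lies_on v l.
Proof. by case: HB => _ [_ [_ [_ [_ [_ [H _]]]]]]. Qed.
Lemma red_lev f : is_red f -> level (rng f) = level (src f).
Proof. by case: HB => _ [_ [_ [_ [_ [_ [_ H]]]]]]; apply: H. Qed.

Lemma red_in_uniq h1 h2 : is_red h1 -> is_red h2 -> rng h1 = rng h2 -> h1 = h2.
Proof.
move=> r1 r2 e12.
have [l [rp [[dn0 [rs _]] [iso [l' [l'' [s [el sv]]]]]]]] := cyc (rng h1).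
have dl : deg l = addN2 (deg l') (deg l'') by rewrite el deg_cmp.
move: rp; rewrite /is_red_path => rp.
have [dl1 dl2] := proj1 (N2E _ _) dl; move: dl1 dl2; rewrite /addN2 /= => dl1 dl2.
have sh1 : src l' = rng h1 by [].
have sh2 : src l' = rng h2 by rewrite -e12.
case: (ltnP 0 (deg l'').2) => hb.
- have dd : deg l = addN2 (0, (deg l').2 + 1)%N (0, (deg l'').2 - 1)%N.
    by apply/N2E; rewrite /addN2 /=; split; lia.
  have [p [q [dp [dq [spq epq]]]]] := fact_ex dd.
  have dp0 : deg p <> zeroN2 by rewrite dp => /N2E /= [_]; lia.
  have [U _] := iso p q spq epq dp0.
  have E i : is_red i -> src l' = rng i -> cmp l' i = p.
    move=> ri ei; apply: U.
      by rewrite rng_cmp // el rng_cmp.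
    rewrite deg_cmp // ri dp; apply/N2E; rewrite /=; split; lia.
  have ee : cmp l' h1 = cmp l' h2 by rewrite (E h1 r1 sh1) (E h2 r2 sh2).
  have [_ //] := fact_uniq erefl (etrans r1 (esym r2)) sh1 sh2 ee.
- have d0 : deg l'' = zeroN2 by apply/N2E; rewrite /=; split; lia.
  have vl : rng h1 = rng l.
    rewrite rs el src_cmp // -sh1 s.
    by rewrite (deg0_idm d0) src_idm rng_idm.
  have dd : deg l = addN2 e2 (0, (deg l).2 - 1)%N.
    apply/N2E; rewrite /addN2 /=; split; first lia.
    case: (ltnP 0 (deg l).2) => h0; first lia; exfalso; apply: dn0; apply/N2E; rewrite /=; split; lia.
  have [p [q [dp [dq [spq epq]]]]] := fact_ex dd.
  have dp0 : deg p <> zeroN2 by rewrite dp => /N2E /= [_]; lia.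
  have [U _] := iso p q spq epq dp0.
  by rewrite (U h1 vl (etrans r1 (esym dp))) (U h2 (etrans (esym e12) vl) (etrans r2 (esym dp))).
Qed.

Lemma red_loop v : exists mu, (deg mu).1 = 0 /\ 0 < (deg mu).2 /\ src mu = v /\ rng mu = v.
Proof.
have [l [rp [[dn0 [rs _]] [iso [l' [l'' [s [el sv]]]]]]]] := cyc v.
have dl : deg l = addN2 (deg l') (deg l'') by rewrite el deg_cmp.
move: rp; rewrite /is_red_path => rp.
have [dl1 dl2] := proj1 (N2E _ _) dl; move: dl1 dl2; rewrite /addN2 /= => dl1 dl2.
have s2 : src l'' = rng l' by rewrite -(src_cmp s) -el -rs el rng_cmp.
exists (cmp l'' l'); rewrite deg_cmp // src_cmp // rng_cmp // /addN2 /=.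
split; first lia. split; last by split => //; rewrite -s.
case: (ltnP 0 (deg l).2) => h0; first lia.
exfalso; apply: dn0; apply/N2E; rewrite /=; split; lia.
Qed.

Lemma red_out_ex v : exists f, is_red f /\ src f = v.
Proof.
have [mu [d1 [d2 [sm rm]]]] := red_loop v.
have dd : deg mu = addN2 (0, (deg mu).2 - 1)%N e2.
  by apply/N2E; rewrite /addN2 /=; split; lia.
have [p [q [dp [dq [spq epq]]]]] := fact_ex dd.
by exists q; split => //; rewrite -sm epq src_cmp.
Qed.

Lemma red_in_ex v : exists f, is_red f /\ rng f = v.
Proof.
have [mu [d1 [d2 [sm rm]]]] := red_loop v.
have dd : deg mu = addN2 e2 (0, (deg mu).2 - 1)%N.
  by apply/N2E; rewrite /addN2 /=; split; lia.
have [p [q [dp [dq [spq epq]]]]] := fact_ex dd.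
by exists p; split => //; rewrite -rm epq rng_cmp.
Qed.

Definition rfun v m : seq (Mor L) :=
  epsilon (inhabits [::]) (fun s => forall l, rng l = v -> deg l = m -> l \in s).

Lemma rfunP v m l : rng l = v -> deg l = m -> l \in rfun v m.
Proof.
rewrite /rfun; apply: (epsilon_spec (inhabits [::]) (fun s => forall l, rng l = v -> deg l = m -> l \in s)).
exact: rf.
Qed.

Lemma finset_deg d n : exists s : seq (Mor L), uniq s /\
  forall l, l \in s <-> deg l = d /\ level (rng l) = n.
Proof.
have [sv hsv] := finlev n.
exists (undup [seq l <- flatten [seq rfun v d | v <- sv] | (deg l == d) && (level (rng l) == n)]).
split; first exact: undup_uniq.
move=> l; rewrite mem_undup mem_filter; split.
  by case/andP => /andP [/eqP -> /eqP ->].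
case=> dl ln; rewrite dl ln !eqxx /=.
apply/flatten_mapP; exists (rng l); first exact: hsv.
exact: rfunP.
Qed.

Lemma finset_vert n : exists s : seq (Obj L), uniq s /\ forall v, v \in s <-> level v = n.
Proof.
have [sv hsv] := finlev n.
exists (undup [seq v <- sv | level v == n]); split; first exact: undup_uniq.
move=> v; rewrite mem_undup mem_filter; split; first by case/andP => /eqP.
by move=> e; rewrite e eqxx hsv.
Qed.

Lemma red_out_uniq f1 f2 : is_red f1 -> is_red f2 -> src f1 = src f2 -> f1 = f2.
Proof.
move=> r1 r2 e12.
set n := level (src f1).
have [Es [uE hE]] := finset_deg e2 n.
have [Vs [uV hV]] := finset_vert n.
have urng : uniq (map rng Es).
  rewrite map_inj_in_uniq // => a b /hE [ra _] /hE [rb _]; exact: red_in_uniq.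
have eqr : map rng Es =i Vs.
  move=> v; apply/idP/idP.
    by case/mapP => a /hE [_ la] ->; apply/hV.
  move/hV => lv; have [f [rf' efv]] := red_in_ex v.
  by apply/mapP; exists f => //; apply/hE; rewrite efv.
have sz : size Es = size Vs by rewrite -(size_map rng); apply: perm_size; apply: uniq_perm.
have sub : {subset Vs <= map src Es}.
  move=> v /hV lv; have [f [rf' efv]] := red_out_ex v.
  by apply/mapP; exists f => //; apply/hE; split => //; rewrite red_lev // efv.
have usrc : uniq (map src Es).
  by apply: (leq_size_uniq uV sub); rewrite size_map sz.
apply: (uniq_map_inj usrc) => //; apply/hE; split => //.
  by rewrite red_lev.
by rewrite red_lev // -e12.
Qed.

Lemma red_path_uniq (mu mu' : Mor L) : (deg mu).1 = 0 -> deg mu = deg mu' -> rng mu = rng mu' -> mu = mu'.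
Proof.
move Ek : (deg mu).2 => k; elim: k mu mu' Ek => [|k IH] mu mu' Ek d1 dd er.
  have d0 : deg mu = zeroN2 by apply/N2E; split.
  by rewrite (deg0_idm d0) (deg0_idm (etrans (esym dd) d0)) er.
have e1' : deg mu = addN2 e2 (0, k)%N by apply/N2E; rewrite /addN2 /=; split; lia.
have [h [m [dh [dm [shm em]]]]] := fact_ex e1'.
have [h' [m' [dh' [dm' [shm' em']]]]] := fact_ex (etrans (esym dd) e1').
have hh : h = h'.
  apply: red_in_uniq => //; by rewrite -(rng_cmp shm) -em -(rng_cmp shm') -em'.
rewrite em em' hh; congr cmp; apply: IH.
- by rewrite dm.
- by rewrite dm.
- by rewrite dm dm'.
- by rewrite -shm -shm' hh.
Qed.

Lemma level_path l : level (src l) = level (rng l) + (deg l).1.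
Proof.
move Ek : ((deg l).1 + (deg l).2)%N => k; elim: k l Ek => [|k IH] l Ek.
  have d0 : deg l = zeroN2 by apply/N2E; rewrite /=; split; lia.
  by rewrite d0 (deg0_idm d0) src_idm rng_idm addn0.
case: (ltnP 0 (deg l).1) => h1.
  have dd : deg l = addN2 e1 ((deg l).1 - 1, (deg l).2)%N.
    by apply/N2E; rewrite /addN2 /=; split; lia.
  have [e [m [de [dm [sem em]]]]] := fact_ex dd.
  have Hs : src l = src m by rewrite em src_cmp.
  have Hr : rng l = rng e by rewrite em rng_cmp.
  rewrite Hs Hr IH; last by rewrite dm /=; lia.
  rewrite -sem blue_lev // dm /=; lia.
have dd : deg l = addN2 e2 ((deg l).1, (deg l).2 - 1)%N.
  by apply/N2E; rewrite /addN2 /=; split; lia.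
have [e [m [de [dm [sem em]]]]] := fact_ex dd.
have Hs : src l = src m by rewrite em src_cmp.
have Hr : rng l = rng e by rewrite em rng_cmp.
rewrite Hs Hr IH; last by rewrite dm /=; lia.
rewrite -sem -red_lev // dm /=; lia.
Qed.

Definition rho v : Mor L := epsilon (inhabits (idm v)) (fun f => is_red f /\ src f = v).
Lemma rhoP v : is_red (rho v) /\ src (rho v) = v.
Proof.
rewrite /rho; apply: (epsilon_spec (inhabits (idm v)) (fun f => is_red f /\ src f = v)).
exact: red_out_ex.
Qed.
Lemma rho_red v : is_red (rho v). Proof. by case: (rhoP v). Qed.
Lemma rho_src v : src (rho v) = v. Proof. by case: (rhoP v). Qed.
Lemma rho_uniq f : is_red f -> f = rho (src f).
Proof. by move=> rf'; apply: red_out_uniq => //; [apply: rho_red | rewrite rho_src]. Qed.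

Definition rot v : Obj L := rng (rho v).
Lemma rot_lev v : level (rot v) = level v.
Proof. by rewrite /rot red_lev ?rho_src //; apply: rho_red. Qed.

Definition T1P l mu := deg mu = deg l /\ src mu = rot (src l) /\
   cmp (rho (rng l)) l = cmp mu (rho (src l)).
Definition T1 l : Mor L := epsilon (inhabits l) (T1P l).

Lemma T1_ex l : exists mu, T1P l mu.
Proof.
have dd : deg (cmp (rho (rng l)) l) = addN2 (deg l) e2.
  rewrite deg_cmp ?rho_src // rho_red; apply/N2E; rewrite /addN2 /=; split; lia.
have [p [q [dp [dq [spq epq]]]]] := fact_ex dd.
have sq : src q = src l by rewrite -(src_cmp spq) -epq src_cmp ?rho_src.
have qr : q = rho (src l) by rewrite (rho_uniq dq) sq.
exists p; split => //; split; first by rewrite spq qr.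
by rewrite epq qr.
Qed.

Lemma T1P_T1 l : T1P l (T1 l).
Proof. by rewrite /T1; apply: epsilon_spec; apply: T1_ex. Qed.

Lemma T1_deg l : deg (T1 l) = deg l. Proof. by case: (T1P_T1 l). Qed.
Lemma T1_src l : src (T1 l) = rot (src l). Proof. by case: (T1P_T1 l) => _ []. Qed.
Lemma T1_eq l : cmp (rho (rng l)) l = cmp (T1 l) (rho (src l)).
Proof. by case: (T1P_T1 l) => _ []. Qed.
Lemma T1_rng l : rng (T1 l) = rot (rng l).
Proof.
have := congr1 rng (T1_eq l).
by rewrite rng_cmp ?rho_src // rng_cmp // T1_src /rot.
Qed.

Lemma T1_char l mu : deg mu = deg l -> src mu = rot (src l) ->
  cmp (rho (rng l)) l = cmp mu (rho (src l)) -> mu = T1 l.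
Proof.
move=> d s e; have [] := @fact_uniq _ mu (rho (src l)) (T1 l) (rho (src l)).
- by rewrite T1_deg.
- by [].
- by rewrite s.
- by rewrite T1_src.
- by rewrite -e T1_eq.
by [].
Qed.

Lemma T1_cmp l m : src l = rng m -> T1 (cmp l m) = cmp (T1 l) (T1 m).
Proof.
move=> s; symmetry; apply: T1_char.
- by rewrite deg_cmp ?T1_src ?T1_rng ?s // deg_cmp // !T1_deg.
- by rewrite src_cmp ?T1_src ?T1_rng ?s // src_cmp.
rewrite rng_cmp // src_cmp // -cmpA ?rho_src // T1_eq s cmpA ?T1_src ?T1_rng ?s ?rho_src //.
by rewrite T1_eq -cmpA ?T1_src ?T1_rng ?rho_src ?s.
Qed.

Lemma T1_idm v : T1 (idm v) = idm (rot v).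
Proof.
symmetry; apply: T1_char.
- by rewrite !deg_idm.
- by rewrite !src_idm.
rewrite rng_idm src_idm /rot; have := cmp_idr (rho v); rewrite rho_src => ->.
by rewrite cmp_idl.
Qed.

Lemma T1_inj l l' : T1 l = T1 l' -> l = l'.
Proof.
move=> e.
have rr : rho (src l) = rho (src l').
  apply: red_in_uniq; try exact: rho_red.
  by rewrite -/(rot _) -/(rot _) -T1_src -T1_src e.
have E : cmp (rho (rng l)) l = cmp (rho (rng l')) l' by rewrite !T1_eq e rr.
have [] := fact_uniq _ _ _ _ E.
- by rewrite !rho_red.
- by rewrite -(T1_deg l) -(T1_deg l') e.
- by rewrite rho_src.
- by rewrite rho_src.
by [].
Qed.

Definition Tk k := iter k T1.
Lemma Tk_deg k l : deg (Tk k l) = deg l.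
Proof. by elim: k => //= k IH; rewrite T1_deg. Qed.
Lemma Tk_src k l : src (Tk k l) = iter k rot (src l).
Proof. by elim: k => //= k IH; rewrite T1_src IH. Qed.
Lemma Tk_rng k l : rng (Tk k l) = iter k rot (rng l).
Proof. by elim: k => //= k IH; rewrite T1_rng IH. Qed.
Lemma Tk_cmp k l m : src l = rng m -> Tk k (cmp l m) = cmp (Tk k l) (Tk k m).
Proof. by move=> s; elim: k => //= k ->; rewrite T1_cmp // Tk_src Tk_rng s. Qed.
Lemma Tk_idm k v : Tk k (idm v) = idm (iter k rot v).
Proof. by elim: k => //= k ->; rewrite T1_idm. Qed.
Lemma Tk_inj k l l' : Tk k l = Tk k l' -> l = l'.
Proof. by elim: k => //= k IH /T1_inj /IH. Qed.
Lemma iter_lev k v : level (iter k rot v) = level v.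
Proof. by elim: k => //= k IH; rewrite rot_lev. Qed.

Lemma Fmap_T1 e : is_blue e -> Fmap e = T1 e.
Proof.
move=> be.
pose P := fun g : Mor L => exists f f' : Mor L, is_red f /\ is_red f' /\ src f = rng e /\
      is_blue g /\ src g = rng f' /\ cmp f e = cmp g f'.
have PT : P (T1 e).
  exists (rho (rng e)), (rho (src e)); do ! split; try exact: rho_red.
  - by rewrite rho_src.
  - by rewrite /is_blue T1_deg.
  - by rewrite T1_src.
  - exact: T1_eq.
have : P (Fmap e) by rewrite /Fmap; apply: (epsilon_spec (inhabits e) P); exists (T1 e).
case=> f [f' [rf' [rf'' [sf [bg [sg eq]]]]]].
apply: T1_char.
- by rewrite bg be.
- have sf' : src f' = src e by rewrite -(src_cmp sg) -eq src_cmp.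
  by rewrite sg /rot -sf' -(rho_uniq rf'').
- have E : f' = rho (src e).
    by rewrite (rho_uniq rf'') -(src_cmp sg) -eq src_cmp.
  by rewrite -E -eq (rho_uniq rf') sf.
Qed.

Lemma iter_Fmap k e : is_blue e -> iter k (@Fmap L) e = Tk k e.
Proof.
move=> be; elim: k => //= k ->; apply: Fmap_T1; by rewrite /is_blue Tk_deg.
Qed.

Lemma levelEdgesP n : uniq (levelEdges level n) /\
  forall e, e \in levelEdges level n <-> (is_blue e /\ level (rng e) = n).
Proof.
rewrite /levelEdges; apply: (epsilon_spec (inhabits [::])
  (fun s => uniq s /\ forall e, e \in s <-> (is_blue e /\ level (rng e) = n))).
have [s [us hs]] := finset_deg e1 n; by exists s.
Qed.

Lemma period e : is_blue e -> exists k, 0 < k /\ iter k (@Fmap L) e = e.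
Proof.
move=> be; set n := level (rng e).
have [_ hs] := levelEdgesP n.
have [k [k0 ek]] : exists k, 0 < k /\ iter k T1 e = e.
  apply: (fin_period (s := levelEdges level n)).
  - move=> x /hs [bx lx]; apply/hs; split; first by rewrite /is_blue T1_deg.
    by rewrite T1_rng rot_lev.
  - by move=> x y _ _; apply: T1_inj.
  - by apply/hs.
by exists k; split => //; rewrite iter_Fmap.
Qed.

Lemma orderFP e : is_blue e -> 0 < orderF e /\ iter (orderF e) (@Fmap L) e = e.
Proof.
move=> be.
have ex : exists k, (0 < k) && (iter k (@Fmap L) e == e).
  by have [k [k0 ek]] := period be; exists k; rewrite k0 ek eqxx.
have : (0 < orderF e) /\ iter (orderF e) (@Fmap L) e = e /\
    (forall j, 0 < j -> iter j (@Fmap L) e = e -> orderF e <= j).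
  rewrite /orderF; apply: (epsilon_spec (inhabits 0) (fun k : nat => (0 < k) /\
    iter k (@Fmap L) e = e /\ forall j, 0 < j -> iter j (@Fmap L) e = e -> k <= j)).
  case: (ex_minnP ex) => m /andP [m0 /eqP em] mn.
  exists m; split => //; split => // j j0 ej; apply: mn; by rewrite j0 ej eqxx.
by case=> [? [? _]].
Qed.

Lemma dvd_biglcm (T : eqType) (s : seq T) (F : T -> nat) x :
  x \in s -> F x %| \big[lcmn/1]_(y <- s) F y.
Proof.
elim: s => //= a s IH; rewrite inE big_cons => /orP [/eqP ->|xs].
  exact: dvdn_lcml.
exact: dvdn_trans (IH xs) (dvdn_lcmr _ _).
Qed.

Lemma iter_fix (T : Type) (f : T -> T) x k : f x = x -> iter k f x = x.
Proof. by move=> fx; elim: k => //= k ->. Qed.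

Lemma period_rot n w : level w = n.+1 -> iter (n * Olcm level n) rot w = w.
Proof.
move=> lw.
have [e [be sew]] : exists e, is_blue e /\ src e = w.
  apply: NNPP => ne; have := sinks (fun e be sw => ne (ex_intro _ e (conj be sw))).
  by rewrite lw.
have le : level (rng e) = n by have := blue_lev be; rewrite sew lw => -[].
have [_ eo] := orderFP be.
have io : iter (orderF e) rot w = w.
  by rewrite -sew -Tk_src -iter_Fmap // eo.
have [_ hs] := levelEdgesP n.
have : orderF e %| Olcm level n by apply: dvd_biglcm; apply/hs.
case/dvdnP => q ->; rewrite mulnA iterM; exact: iter_fix.
Qed.

Definition mm v := mseq level (level v).
Definition ao v := iter (mm v) rot v.

Lemma mm_step n w : level w = n.+1 -> iter (mseq level n.+1) rot w = iter (mseq level n) rot w.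
Proof. by move=> lw; rewrite /= iterD period_rot. Qed.

Lemma ao_lev v : level (ao v) = level v.
Proof. exact: iter_lev. Qed.

Definition splitP l (p : Mor L * Mor L) := deg p.1 = e1 /\ deg p.2 = subN2 (deg l) e1 /\
  src p.1 = rng p.2 /\ l = cmp p.1 p.2.
Definition splitb l := epsilon (inhabits (l, l)) (splitP l).

Fixpoint A (a : nat) (l : Mor L) : Mor L :=
  match a with
  | 0 => Tk (mm (rng l)) l
  | a'.+1 => cmp (Tk (mm (rng l)) (splitb l).1) (A a' (splitb l).2)
  end.
Definition alpha l := A (deg l).1 l.

Lemma alpha_red l : (deg l).1 = 0 -> alpha l = Tk (mm (rng l)) l.
Proof. by rewrite /alpha => ->. Qed.

Lemma alpha_cons e m : is_blue e -> src e = rng m ->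
  alpha (cmp e m) = cmp (Tk (mm (rng e)) e) (alpha m).
Proof.
move=> be s.
have dem : deg (cmp e m) = addN2 e1 (deg m) by rewrite deg_cmp // be.
have sP : splitP (cmp e m) (splitb (cmp e m)).
  rewrite /splitb; apply: epsilon_spec.
  exists (e, m); split => //; split => //; rewrite dem.
  by apply/N2E; rewrite /addN2 /subN2 /=; split; lia.
case: sP => d1 [d2 [s' E]].
have d3 : subN2 (deg (cmp e m)) e1 = deg m.
  rewrite dem; apply/N2E; rewrite /addN2 /subN2 /=; split; lia.
have [E1 E2] := fact_uniq (etrans d1 (esym be)) (etrans d2 d3) s' s (esym E).
rewrite /alpha dem /= E1 E2 rng_cmp //.
Qed.

Lemma decomp l : 0 < (deg l).1 -> exists e m, is_blue e /\ src e = rng m /\ l = cmp e m /\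
  deg m = ((deg l).1 - 1, (deg l).2)%N.
Proof.
move=> h; have dd : deg l = addN2 e1 ((deg l).1 - 1, (deg l).2)%N.
  by apply/N2E; rewrite /addN2 /=; split; lia.
have [e [m [de [dm [sem em]]]]] := fact_ex dd.
by exists e, m.
Qed.

Lemma alpha_ind (P : Mor L -> Prop) :
  (forall l, (deg l).1 = 0 -> P l) ->
  (forall e m, is_blue e -> src e = rng m -> P m -> P (cmp e m)) -> forall l, P l.
Proof.
move=> H0 H1 l; move Ek : (deg l).1 => k; elim: k l Ek => [|k IH] l Ek; first exact: H0.
have [e [m [be [s [E dm]]]]] := decomp (ltac:(rewrite Ek; lia) : 0 < (deg l).1).
rewrite E; apply: H1 => //; apply: IH; rewrite dm /=; lia.
Qed.

Lemma red_lev_eq l : (deg l).1 = 0 -> level (src l) = level (rng l).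
Proof. by move=> h; rewrite level_path h addn0. Qed.

Lemma compat e : is_blue e -> src (Tk (mm (rng e)) e) = ao (src e).
Proof.
move=> be; rewrite Tk_src /ao /mm (blue_lev be) mm_step //.
by rewrite blue_lev.
Qed.

Lemma alpha_ends l : rng (alpha l) = ao (rng l) /\ src (alpha l) = ao (src l).
Proof.
elim/alpha_ind: l => [l h|e m be s [IH1 IH2]].
  by rewrite alpha_red // Tk_rng Tk_src /ao /mm (red_lev_eq h).
have c : src (Tk (mm (rng e)) e) = rng (alpha m) by rewrite compat // IH1 s.
rewrite alpha_cons // rng_cmp // src_cmp // rng_cmp // src_cmp //.
by rewrite Tk_rng.
Qed.
Lemma alpha_rng l : rng (alpha l) = ao (rng l). Proof. by case: (alpha_ends l). Qed.
Lemma alpha_src l : src (alpha l) = ao (src l). Proof. by case: (alpha_ends l). Qed.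

Lemma alpha_deg l : deg (alpha l) = deg l.
Proof.
elim/alpha_ind: l => [l h|e m be s IH]; first by rewrite alpha_red // Tk_deg.
have c : src (Tk (mm (rng e)) e) = rng (alpha m) by rewrite compat // alpha_rng s.
by rewrite alpha_cons // !deg_cmp // IH Tk_deg.
Qed.

Lemma alpha_idm v : alpha (idm v) = idm (ao v).
Proof. by rewrite alpha_red ?deg_idm // Tk_idm rng_idm. Qed.

Lemma compat2 e m : is_blue e -> src e = rng m -> src (Tk (mm (rng e)) e) = rng (alpha m).
Proof. by move=> be s; rewrite compat // alpha_rng s. Qed.

Lemma alpha_cmp_red l m : (deg l).1 = 0 -> src l = rng m ->
  alpha (cmp l m) = cmp (alpha l) (alpha m).
Proof.
move: l; elim/alpha_ind: m => [m hm l hl s|e m' be s' IH l hl s].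
  have h : (deg (cmp l m)).1 = 0 by rewrite deg_cmp // /addN2 /= hl hm.
  rewrite (alpha_red h) (alpha_red hl) (alpha_red hm) Tk_cmp // rng_cmp //.
  by rewrite -s /mm (red_lev_eq hl).
have sle : src l = rng e by rewrite s rng_cmp.
have dle : deg (cmp l e) = addN2 e1 (0, (deg l).2)%N.
  rewrite deg_cmp // be; apply/N2E; rewrite /addN2 /=; split; lia.
have [e2' [l'' [de' [dl'' [s'' E]]]]] := fact_ex dle.
have be2 : is_blue e2' by [].
have hl'' : (deg l'').1 = 0 by rewrite dl''.
have r1 : rng e2' = rng l by rewrite -(rng_cmp s'') -E rng_cmp.
have s1 : src l'' = src e by rewrite -(src_cmp s'') -E src_cmp.
have ke : mm (rng e) = mm (rng l) by rewrite /mm -sle red_lev_eq.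
have ke2 : mm (rng e2') = mm (rng l) by rewrite r1.
set k := mm (rng l) in ke ke2 *.
have sl''m : src l'' = rng m' by rewrite s1.
have al'' : alpha l'' = Tk k l''.
  rewrite alpha_red //; apply: red_path_uniq.
  - by rewrite Tk_deg.
  - by rewrite !Tk_deg.
  rewrite !Tk_rng /k /mm -s'' (blue_lev be2) mm_step ?r1 //.
  by rewrite (blue_lev be2) r1.
have c1 : src (Tk k l'') = rng (alpha m').
  by rewrite Tk_src s1 -ke -Tk_src; apply: compat2.
rewrite -cmpA // E cmpA // alpha_cons //; last by rewrite rng_cmp.
rewrite ke2 IH // al'' (alpha_red hl) (alpha_cons be s') ke.
have f1 : src (Tk k e2') = rng (Tk k l'') by rewrite Tk_src Tk_rng s''.
have f3 : src (Tk k l) = rng (Tk k e) by rewrite Tk_src Tk_rng sle.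
have f4 : src (Tk k e) = rng (alpha m') by rewrite -ke; apply: compat2.
rewrite -(cmpA f1 c1) -(cmpA f3 f4).
rewrite -(Tk_cmp k s'') -(Tk_cmp k sle) E //.
Qed.

Lemma alpha_cmp l m : src l = rng m -> alpha (cmp l m) = cmp (alpha l) (alpha m).
Proof.
move: m; elim/alpha_ind: l => [l hl m s|e l' be s' IH m s]; first exact: alpha_cmp_red.
have s2 : src l' = rng m by rewrite -s src_cmp.
rewrite cmpA // alpha_cons //; last by rewrite rng_cmp.
rewrite IH // alpha_cons // cmpA //; first exact: compat2.
by rewrite alpha_src alpha_rng s2.
Qed.

Lemma alpha_inj l l' : alpha l = alpha l' -> l = l'.
Proof.
move: l'; elim/alpha_ind: l => [l hl l' E|e m be s IH l' E].
  have dd : deg l = deg l' by rewrite -alpha_deg E alpha_deg.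
  have hl' : (deg l').1 = 0 by rewrite -dd.
  have lv : level (rng l) = level (rng l') by rewrite -(ao_lev (rng l)) -(ao_lev (rng l')) -!alpha_rng E.
  move: E; rewrite !alpha_red // /mm lv; exact: Tk_inj.
have dd : deg (cmp e m) = deg l' by rewrite -alpha_deg E alpha_deg.
have pos : 0 < (deg l').1 by rewrite -dd deg_cmp // /addN2 /= be.
have [e' [m' [be' [s' [E' dm']]]]] := decomp pos.
subst l'.
move: E dd; rewrite !alpha_cons // => E dd.
have dm : deg m = deg m'.
  move: dd; rewrite !deg_cmp // be be' => /N2E [/= h1 h2]; apply/N2E; split; lia.
have d1 : deg (Tk (mm (rng e)) e) = deg (Tk (mm (rng e')) e') by rewrite !Tk_deg be be'.
have d2 : deg (alpha m) = deg (alpha m') by rewrite !alpha_deg.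
have [E1 E2] := fact_uniq d1 d2 (compat2 be s) (compat2 be' s') E.
have lv : level (rng e) = level (rng e').
  by rewrite -(iter_lev (mm (rng e)) (rng e)) -(iter_lev (mm (rng e')) (rng e')) -!Tk_rng E1.
move: E1; rewrite /mm lv => /Tk_inj ->.
by rewrite (IH m').
Qed.

Lemma alpha_specP : alpha_spec level alpha.
Proof.
move=> n e be ln.
have s : src e = rng (idm (src e)) by rewrite rng_idm.
have E : e = cmp e (idm (src e)) by rewrite cmp_idr.
rewrite {1}E alpha_cons // alpha_idm -(compat be) cmp_idr iter_Fmap //.
by rewrite /mm ln.
Qed.

Lemma alpha_surj y : exists x, alpha x = y.
Proof.
have [S [uS hS]] := finset_deg (deg y) (level (rng y)).
have [x _ E] := @fin_surj _ S alpha uS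
  (fun x xs => match proj1 (hS x) xs with conj d lv =>
     proj2 (hS (alpha x)) (conj (etrans (alpha_deg x) d) (etrans (f_equal level (alpha_rng x)) (etrans (ao_lev _) lv))) end)
  (fun a b _ _ => @alpha_inj a b) y (proj2 (hS y) (conj erefl erefl)).
by exists x.
Qed.

Definition ainv y := epsilon (inhabits y) (fun x => alpha x = y).
Lemma alpha_ainv y : alpha (ainv y) = y.
Proof. by rewrite /ainv; apply: (epsilon_spec (inhabits y) (fun x => alpha x = y)); apply: alpha_surj. Qed.
Lemma ainv_alpha x : ainv (alpha x) = x.
Proof. by apply: alpha_inj; rewrite alpha_ainv. Qed.

Lemma alpha_aut : is_automorphism alpha.
Proof.
split; last split.
- exists ao; split; first exact: alpha_idm.
  split; first exact: alpha_rng.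
  split; first exact: alpha_src.
  exact: alpha_cmp.
- exact: alpha_deg.
- exists ainv; [exact: ainv_alpha | exact: alpha_ainv].
Qed.

Lemma alpha_unique beta : is_automorphism beta -> alpha_spec level beta -> beta = alpha.
Proof.
move=> [[bo [bid [brng [bsrc bcmp]]]] [bdeg _]] bspec.
have bT e : is_blue e -> beta e = Tk (mm (rng e)) e.
  by move=> be; rewrite (bspec (level (rng e))) // iter_Fmap.
have bo_ao v : bo v = ao v.
  have [e [be <-]] := nosrc v.
  by rewrite -brng bT // Tk_rng.
apply: functional_extensionality => l.
elim/alpha_ind: l => [l hl|e m be s IH].
  apply: red_path_uniq; rewrite ?bdeg ?alpha_deg //.
  by rewrite brng alpha_rng bo_ao.
by rewrite bcmp // alpha_cons // IH bT.
Qed.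

End Brat.

Lemma list_pre (T : Type) (X : T -> Prop) (B : (T -> Prop) -> Prop) (h : T -> T) :
  (forall b, B b -> exists b', B b' /\ forall x, X x -> (b (h x) <-> b' x)) ->
  forall bs, Forall B bs -> exists bs', Forall B bs' /\
    forall x, X x -> (Forall (fun b => b (h x)) bs <-> Forall (fun b => b x) bs').
Proof.
move=> H; elim=> [|b bs IH] FB.
  by exists nil; split => // x _; split => _; constructor.
inversion FB as [|b0 bs0 Bb FBs]; subst.
have [b' [Bb' hb']] := H b Bb.
have [bs' [FB' hbs']] := IH FBs.
exists (b' :: bs'); split; first by constructor.
move=> x Xx; split.
  move=> F; inversion F as [|b1 bs1 F1 F2]; subst.
  by constructor; [apply/hb' | apply/hbs'].
move=> F; inversion F as [|b1 bs1 F1 F2]; subst.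
by constructor; [apply/hb' | apply/hbs'].
Qed.

Lemma homeo_gen (T : Type) (X : T -> Prop) (B : (T -> Prop) -> Prop) (f g : T -> T) :
  (forall x, X x -> X (f x)) -> (forall y, X y -> X (g y)) ->
  (forall x, X x -> g (f x) = x) -> (forall y, X y -> f (g y) = y) ->
  (forall b, B b -> exists b', B b' /\ forall x, X x -> (b (f x) <-> b' x)) ->
  (forall b, B b -> exists b', B b' /\ forall y, X y -> (b (g y) <-> b' y)) ->
  homeo_on X B f.
Proof.
move=> Xf Xg gf fg Bf Bg; split; first exact: Xf.
split; first by move=> x y Xx Xy e; rewrite -(gf x Xx) e gf.
split; first by move=> y Xy; exists (g y); split; [apply: Xg | apply: fg].
split.
  move=> V [VX Vo]; split; first by move=> x [].
  move=> x [Xx Vfx]; have [bs [FB [Fx Hy]]] := Vo _ Vfx.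
  have [bs' [FB' hh]] := list_pre Bf FB.
  exists bs'; split => //; split; first by apply/hh.
  move=> y Xy Fy; split => //; apply: Hy; first exact: Xf.
  by apply/hh.
move=> U [UX Uo]; split; first by move=> y [x [Ux <-]]; apply: Xf; apply: UX.
move=> y [x [Ux <-]]; have [bs [FB [Fx Hy]]] := Uo _ Ux.
have [bs' [FB' hh]] := list_pre Bg FB.
have Xx := UX _ Ux.
exists bs'; split => //; split.
  by apply/hh; [apply: Xf | rewrite gf].
move=> y' Xy' Fy'; exists (g y'); split; last exact: fg.
by apply: Hy; [apply: Xg | apply/hh].
Qed.

Section Top.
Variable L : two_graph.

Lemma om_eq m1 m2 n1 n2 (h1 : leN2 m1 n1) (h2 : leN2 m2 n2) :
  m1 = m2 -> n1 = n2 -> om h1 = om h2.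
Proof. move=> e1 e2; subst; congr exist; exact: bool_irrelevance. Qed.

Lemma inv_aut (phi : Mor L -> Mor L) : is_automorphism phi ->
  exists psi, is_automorphism psi /\ cancel phi psi /\ cancel psi phi.
Proof.
move=> [[ao [aid [arng [asrc acmp]]]] [adeg [psi c1 c2]]].
have aoinj : injective ao.
  move=> a b e; apply: idm_inj; apply: (can_inj c1); by rewrite !aid e.
pose go v := rng (psi (idm v)).
have pid v : psi (idm v) = idm (go v).
  apply: deg0_idm; by rewrite -adeg c2 deg_idm.
have aogo v : ao (go v) = v.
  by apply: idm_inj; rewrite -aid -pid c2.
have prng f : rng (psi f) = go (rng f).
  by apply: aoinj; rewrite aogo -arng c2.
have psrc f : src (psi f) = go (src f).
  by apply: aoinj; rewrite aogo -asrc c2.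
exists psi; split; last by split.
split; last split.
- exists go; split => //; split => //; split => // f g s.
  apply: (can_inj c1); rewrite acmp ?c2 //.
  by rewrite psrc prng s.
- by move=> f; rewrite -adeg c2.
- by exists phi.
Qed.

Variables (phi psi : Mor L -> Mor L).
Hypotheses (aphi : is_automorphism phi) (apsi : is_automorphism psi)
  (c1 : cancel phi psi) (c2 : cancel psi phi).

Lemma aut_ends (a : Mor L -> Mor L) : is_automorphism a -> exists ao : Obj L -> Obj L,
  (forall v, a (idm v) = idm (ao v)) /\ (forall f, rng (a f) = ao (rng f)) /\
  (forall f, src (a f) = ao (src f)) /\
  (forall f g, src f = rng g -> a (cmp f g) = cmp (a f) (a g)) /\ (forall f, deg (a f) = deg f).
Proof. by move=> [[ao H] [d _]]; exists ao; intuition. Qed.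

Lemma inf_map (a : Mor L -> Mor L) x : is_automorphism a -> is_inf_path x -> is_inf_path (a \o x).
Proof.
move=> /aut_ends [ao [aid [arng [asrc [acmp adeg]]]]] [xo [H1 [H2 H3]]].
exists (ao \o xo); split; first by move=> m /=; rewrite H1 aid.
split.
  move=> m n h /=; have [r [s d]] := H2 m n h.
  by rewrite arng asrc adeg r s d.
move=> m n p h1 h2 h3 /=; rewrite (H3 m n p h1 h2 h3) acmp //.
by have [_ [-> _]] := H2 m n h1; have [-> _] := H2 n p h2.
Qed.

Lemma cat_map (a : Mor L -> Mor L) l z x : is_automorphism a -> cat_is l z x ->
  cat_is (a l) (a \o z) (a \o x).
Proof.
move=> aa [ix [x0 sh]].
have [ao [aid [arng [asrc [acmp adeg]]]]] := aut_ends aa.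
split; first exact: inf_map.
split.
  rewrite /=; have -> : om (leN2_0 (deg (a l))) = om (leN2_0 (deg l)).
    by apply: om_eq; rewrite ?adeg.
  by rewrite x0.
subst z; apply: functional_extensionality => w; rewrite /shift /=.
congr a; congr x; apply: om_eq; by rewrite adeg.
Qed.

Lemma cyl_map (a : Mor L -> Mor L) l x : is_automorphism a -> cyl l x -> cyl (a l) (a \o x).
Proof.
move=> aa [z [iz [pz cz]]].
have [ao [aid [arng [asrc [acmp adeg]]]]] := aut_ends aa.
exists (a \o z); split; first exact: inf_map.
split; last exact: cat_map.
by rewrite /path_rng /= arng -/(path_rng z) pz asrc.
Qed.

Lemma comp_can (x : ipath L) : psi \o (phi \o x) = x.
Proof. by apply: functional_extensionality => w /=; rewrite c1. Qed.
Lemma comp_can2 (x : ipath L) : phi \o (psi \o x) = x.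
Proof. by apply: functional_extensionality => w /=; rewrite c2. Qed.

Lemma cyl_iff l x : cyl l (phi \o x) <-> cyl (psi l) x.
Proof.
split.
  by move=> /(cyl_map apsi); rewrite comp_can.
by move=> /(cyl_map aphi); rewrite c2.
Qed.

Definition gmap (a : Mor L -> Mor L) (g : gelt L) := GElt (a \o gx g) (gk g) (a \o gy g).

Lemma bcyl_map (a : Mor L -> Mor L) l m g : is_automorphism a -> bcyl l m g ->
  bcyl (a l) (a m) (gmap a g).
Proof.
move=> aa [z [iz [pz [cx [cy k]]]]].
have [ao [aid [arng [asrc [acmp adeg]]]]] := aut_ends aa.
exists (a \o z); split; first exact: inf_map.
split; first by rewrite /path_rng /= arng -/(path_rng z) pz asrc.
split; first exact: cat_map.
split; first exact: cat_map.
by rewrite /= k !adeg.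
Qed.

Lemma gmap_can g : gmap psi (gmap phi g) = g.
Proof. by case: g => x k y; rewrite /gmap /= !comp_can. Qed.
Lemma gmap_can2 g : gmap phi (gmap psi g) = g.
Proof. by case: g => x k y; rewrite /gmap /= !comp_can2. Qed.

Lemma bcyl_iff l m g : bcyl l m (gmap phi g) <-> bcyl (psi l) (psi m) g.
Proof.
split.
  by move=> /(bcyl_map apsi); rewrite gmap_can.
by move=> /(bcyl_map aphi); rewrite !c2.
Qed.

Lemma inG_map (a : Mor L -> Mor L) g : is_automorphism a -> in_G g -> in_G (gmap a g).
Proof.
move=> aa [ix [iy [l [m [k sh]]]]].
split; first exact: inf_map.
split; first exact: inf_map.
exists l, m; split => //=.
apply: functional_extensionality => w.
by have := congr1 (fun h => h w) sh; rewrite /shift /= => ->.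
Qed.

End Top.

Lemma final_top (L : two_graph) (phi : Mor L -> Mor L) : is_automorphism phi ->
  homeo_on (@is_inf_path L) (@basisInf L) (fun x => phi \o x) /\
  top_groupoid_aut (fun g : gelt L => GElt (phi \o gx g) (gk g) (phi \o gy g)).
Proof.
move=> aphi; have [psi [apsi [c1 c2]]] := inv_aut aphi.
split.
  apply: (@homeo_gen _ _ _ _ (fun x => psi \o x)).
  - by move=> x /=; apply: inf_map.
  - by move=> x /=; apply: inf_map.
  - by move=> x _; apply: comp_can.
  - by move=> x _; apply: comp_can2.
  - move=> b [l hl]; exists (cyl (psi l)); split; first by exists (psi l).
    by move=> x _; split => [/hl /(cyl_iff aphi apsi c1 c2) //|/(cyl_iff aphi apsi c1 c2) h]; apply/hl.
  - move=> b [l hl]; exists (cyl (phi l)); split; first by exists (phi l).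
    by move=> x _; split => [/hl /(cyl_iff apsi aphi c2 c1) //|/(cyl_iff apsi aphi c2 c1) h]; apply/hl.
split.
  apply: (@homeo_gen _ _ _ _ (gmap psi)).
  - by move=> g /=; apply: inG_map.
  - by move=> g /=; apply: inG_map.
  - by move=> g _; apply: gmap_can.
  - by move=> g _; apply: gmap_can2.
  - move=> b [l [m [s hl]]]; exists (bcyl (psi l) (psi m)); split.
      exists (psi l), (psi m); split => //.
      have [go [_ [_ [gsrc _]]]] := aut_ends apsi; by rewrite !gsrc s.
    by move=> g _; split => [/hl /(bcyl_iff aphi apsi c1 c2) //|/(bcyl_iff aphi apsi c1 c2) h]; apply/hl.
  - move=> b [l [m [s hl]]]; exists (bcyl (phi l) (phi m)); split.
      exists (phi l), (phi m); split => //.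
      have [go [_ [_ [gsrc _]]]] := aut_ends aphi; by rewrite !gsrc s.
    by move=> g _; split => [/hl /(bcyl_iff apsi aphi c2 c1) //|/(bcyl_iff apsi aphi c2 c1) h]; apply/hl.
split.
  move=> g h _ _; rewrite /composable /=; split; last by move=> ->.
  by move=> E; rewrite -(comp_can c1 (gy g)) E comp_can.
by [].
Qed.

Theorem lemma7p3 (L : two_graph) (level : Obj L -> nat) :
  rank2_bratteli level ->
  exists alpha : Mor L -> Mor L,
    (is_automorphism alpha /\ alpha_spec level alpha) /\
    (forall beta : Mor L -> Mor L,
        is_automorphism beta -> alpha_spec level beta -> beta = alpha) /\
    homeo_on (@is_inf_path L) (@basisInf L) (fun x => alpha \o x) /\
    top_groupoid_aut
      (fun g : gelt L => GElt (alpha \o gx g) (gk g) (alpha \o gy g)).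
Proof.
move=> HB; exists (alpha level).
split; first by split; [exact: (alpha_aut HB) | exact: (alpha_specP HB)].
split; first by move=> beta; apply: (alpha_unique HB).
exact: final_top (alpha_aut HB).
Qed.
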